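(* Let $\Sigma$ be a finite alphabet and let $\mathbf w$ be a right-infinite word over $\Sigma$ with linear factor complexity. Then the set of primitive factors $y$ of $\mathbf w$ such that $y^n$ is a factor of $\mathbf w$ for every $n\ge 1$ is finite.
   Context: A factor of $\mathbf w$ is a finite block of contiguous symbols of $\mathbf w$. A nonempty word is primitive if it is not of the form $z^m$ with $m\ge 2$. $p_{\mathbf w}(n)$ is the number of distinct factors of $\mathbf w$ of length $n$; $\mathbf w$ has linear factor complexity if there are constants $A,B$ with $p_{\mathbf w}(n)\le An+B$ for all $n$. *)

(* Defs.v *)
From mathcomp Require Import all_boot.
From mathcomp Require Import boolp.
Set Implicit Arguments. Unset Strict Implicit. Unset Printing Implicit Defensive.

Definition infword (T : Type) := nat -> T.

Definition factor (T : Type) (w : infword T) (x : seq T) : Prop :=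
  exists i, x = mkseq (fun k => w (i + k)) (size x).

Definition wpow (T : Type) (z : seq T) (n : nat) : seq T := flatten (nseq n z).

Definition primitive (T : Type) (y : seq T) : Prop :=
  y <> [::] /\ ~ (exists (z : seq T) (m : nat), 2 <= m /\ y = wpow z m).

Definition complexity (T : finType) (w : infword T) (n : nat) : nat :=
  #|[set t : n.-tuple T | `[< factor w (val t) >]]|.

Definition linear_complexity (T : finType) (w : infword T) : Prop :=
  exists A B : nat, forall n, complexity w n <= A * n + B.

(* Main.v *)
Require Import Defs.
From mathcomp Require Import all_boot.
From mathcomp Require Import boolp zify.
Set Implicit Arguments. Unset Strict Implicit. Unset Printing Implicit Defensive.

Section Periods.
Variable T : eqType.

Definition gper (V : nat -> T) d := forall k, V (k + d) = V k.

Lemma gper_sub V p q : gper V p -> gper V q -> p <= q -> gper V (q - p).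
Proof. move=> hp hq pq k. by rewrite -hp -addnA subnK // hq. Qed.

Lemma gper_mul V p m : gper V p -> gper V (m * p).
Proof.
move=> hp; elim: m => [|m IH] k; first by rewrite mul0n addn0.
by rewrite mulSn (addnC p) addnA hp IH.
Qed.

Lemma gper_gcd V n : forall p q, p + q <= n -> gper V p -> gper V q -> gper V (gcdn p q).
Proof.
elim: n => [|n IH] p q.
  rewrite leqn0 addn_eq0 => /andP[/eqP-> /eqP->]. by rewrite gcdn0.
move=> hn hp hq.
case: (posnP p) => [->|p0]; first by rewrite gcd0n.
case: (posnP q) => [->|q0]; first by rewrite gcdn0.
case: (leqP p q) => pq.
- rewrite -(subnK pq) gcdnDr. apply: IH => //; [lia | exact: gper_sub].
- rewrite gcdnC -(subnK (ltnW pq)) gcdnDr. apply: IH => //; [lia | apply: gper_sub => //; exact: ltnW].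
Qed.

Definition perw (x0 : T) (y : seq T) k := nth x0 y (k %% size y).

Lemma perw_per x0 y : gper (perw x0 y) (size y).
Proof. by move=> k; rewrite /perw modnDr. Qed.

Lemma size_wpow (z : seq T) m : size (wpow z m) = m * size z.
Proof. elim: m => [|m IH] //=. by rewrite /wpow /= size_cat -/(wpow z m) IH mulSn. Qed.

Lemma nth_wpow x0 (z : seq T) m k : k < m * size z -> nth x0 (wpow z m) k = nth x0 z (k %% size z).
Proof.
elim: m k => [|m IH] k; first by rewrite mul0n.
rewrite /wpow /= -/(wpow z m) nth_cat mulSn => hk.
case: ltnP => h; first by rewrite modn_small.
rewrite IH; last lia. by rewrite -{2}(subnK h) modnDr.
Qed.

Lemma prim_noper x0 (y : seq T) s d : primitive y -> 0 < d < size y ->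
  gper (fun k => perw x0 y (s + k)) d -> False.
Proof.
move=> [yn ynp] /andP[d0 dl] hd.
set l := size y in dl *.
set V := fun k => perw x0 y (s + k) in hd.
have hV : gper V l by move=> k; rewrite /V addnA perw_per.
have hg := gper_gcd (leqnn (d + l)) hd hV.
set g := gcdn d l in hg.
have g0 : 0 < g by rewrite gcdn_gt0 d0.
have gd : g <= d by apply: dvdn_leq => //; apply: dvdn_gcdl.
have gl : g %| l by apply: dvdn_gcdr.
have l0 : 0 < l by lia.
have hP : gper (perw x0 y) g.
  have e : forall k, perw x0 y k = V (k + l.-1 * s).
    move=> k; rewrite /V -(gper_mul s (perw_per x0 y) k). congr perw. lia.
  move=> k. by rewrite !e -addnA (addnC g) addnA hg.
apply: ynp; exists (take g y), (l %/ g); split.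
  by rewrite ltn_divRL // mul1n; lia.
apply: (@eq_from_nth _ x0).
  by rewrite size_wpow size_take (_ : g < size y) ?divnK //; lia.
move=> k hk.
have gly : g < size y by lia.
rewrite nth_wpow; last by rewrite size_take gly divnK.
rewrite size_take gly nth_take; last by rewrite ltn_mod.
have : perw x0 y k = perw x0 y (k %% g).
  by rewrite {1}(divn_eq k g) addnC gper_mul.
have kl : k < l by []. have kgl : k %% g < l by apply: (ltn_trans (ltn_pmod k g0)); lia. by rewrite /perw (modn_small kl) (modn_small kgl) => ->.
Qed.

Lemma cross (V1 V2 : nat -> T) p q h : 0 < p -> gper V1 p -> gper V2 q -> p + q <= h ->
  (forall k, k < h -> V1 k = V2 k) -> gper V1 q.
Proof.
move=> p0 h1 h2 hh e k.
have m1 : V1 k = V1 (k %% p) by rewrite {1}(divn_eq k p) addnC gper_mul.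
have m2 : V1 (k + q) = V1 (k %% p + q).
  by rewrite {1}(divn_eq k p) -addnA (addnC _ (_ + q)) gper_mul.
have kp : k %% p < p by rewrite ltn_mod.
rewrite m1 m2 e; last lia. by rewrite h2 e //; lia.
Qed.

Lemma samelen x0 (y1 y2 : seq T) s1 s2 h : primitive y1 -> primitive y2 ->
  size y1 + size y2 <= h ->
  (forall k, k < h -> perw x0 y1 (s1 + k) = perw x0 y2 (s2 + k)) ->
  size y1 = size y2.
Proof.
move=> p1 p2 hh e.
have l1 : 0 < size y1 by move: (p1) => [ne _]; rewrite lt0n size_eq0; apply/eqP.
have l2 : 0 < size y2 by move: (p2) => [ne _]; rewrite lt0n size_eq0; apply/eqP.
have g1 : gper (fun k => perw x0 y1 (s1 + k)) (size y1) by move=> k; rewrite addnA perw_per.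
have g2 : gper (fun k => perw x0 y2 (s2 + k)) (size y2) by move=> k; rewrite addnA perw_per.
have c1 := cross l1 g1 g2 hh e.
have c2 : gper (fun k => perw x0 y2 (s2 + k)) (size y1). { apply: (cross (h:=h) l2 g2 g1); first by rewrite addnC. move=> k hk /=. by rewrite e. }
case: (ltngtP (size y1) (size y2)) => // lt.
- by case: (prim_noper p2 (introT andP (conj l1 lt)) c2).
- by case: (prim_noper p1 (introT andP (conj l2 lt)) c1).
Qed.

End Periods.

Section Main.
Variable T : finType.
Variable w : infword T.
Let x0 := w 0.

Definition good (y : seq T) := factor w y /\ primitive y /\ (forall n, 1 <= n -> factor w (wpow y n)).
Definition forever (y : seq T) := exists i, forall k, w (i + k) = perw x0 y k.

Lemma good_pos y : good y -> 0 < size y.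
Proof. by move=> [_ [[ne _] _]]; rewrite lt0n size_eq0; apply/eqP. Qed.

Lemma occ y n : good y -> exists i, forall k, k < n * size y -> w (i + k) = perw x0 y k.
Proof.
move=> gy; case: n => [|n]; first by exists 0.
have [_ [_ h]] := gy.
have [i ei] := h n.+1 (ltn0Sn _).
exists i => k hk.
have hk' : k < size (wpow y n.+1) by rewrite size_wpow.
rewrite /perw -(nth_wpow x0 (m:=n.+1)) // ei nth_mkseq //.
Qed.

Lemma forever_len y1 y2 : good y1 -> good y2 -> forever y1 -> forever y2 -> size y1 = size y2.
Proof.
move=> [_ [p1 _]] [_ [p2 _]] [i1 e1] [i2 e2].
apply: (@samelen _ x0 y1 y2 i2 i1 (size y1 + size y2)) => // k _.
by rewrite -e1 -e2 !addnA (addnC i1).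
Qed.

Lemma break y N : good y -> ~ forever y -> exists i p, N <= p /\
  (forall k, k < p -> w (i + k) = perw x0 y k) /\ w (i + p) <> perw x0 y p.
Proof.
move=> gy nf.
have [i ei] := occ N gy.
have l0 := good_pos gy.
have ex : exists k, w (i + k) != perw x0 y k.
  apply: contrapT => hn; apply: nf; exists i => k.
  by apply/eqP; apply: contrapT => hk; apply: hn; exists k; apply/negP.
case: (ex_minnP ex) => p hp hmin.
exists i, p; split; last split.
- rewrite leqNgt; apply/negP => lt. move/negP: hp; apply. apply/eqP; apply: ei.
  by apply: (leq_trans lt); rewrite leq_pmulr.
- move=> k kp; apply/eqP; apply: contrapT => hk.
  have := hmin k (introT negP hk). by rewrite leqNgt kp.
- by move/eqP: hp.
Qed.

Definition wtup q L : L.-tuple T :=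
  @Tuple L T (mkseq (fun k => w (q + k)) L) (introT eqP (size_mkseq _ L)).

Lemma count_lb (ys : seq (seq T)) N :
  (forall y, y \in ys -> good y /\ ~ forever y /\ size y <= N) ->
  uniq (map size ys) ->
  size ys * (2 * N) <= complexity w (4 * N).
Proof.
move=> hys uys.
set K := size ys. set L := 4 * N.
pose Q (ij : 'I_K * 'I_(2 * N)) (u : L.-tuple T) : Prop :=
  exists s, (forall k, k < 2 * N + ij.2 -> nth x0 u k = perw x0 (nth [::] ys ij.1) (s + k)) /\
     nth x0 u (2 * N + ij.2) <> nth x0 u (2 * N + ij.2 - size (nth [::] ys ij.1)).
pose g (u : L.-tuple T) := [pick ij | `[< Q ij u >] ].
set F := [set t : L.-tuple T | `[< factor w (val t) >]].
have C1 : forall ij, exists u, u \in F /\ Q ij u.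
  move=> [i j]. set y := nth [::] ys i.
  have yin : y \in ys by apply: mem_nth.
  have [gy [nfy yN]] := hys y yin.
  set jj := 2 * N + j.
  have jL : jj < L by rewrite /jj /L; move: (ltn_ord j); lia.
  have [i0 [p [pL [run br]]]] := break L gy nfy.
  exists (wtup (i0 + (p - jj)) L); split.
    rewrite inE; apply/asboolP; exists (i0 + (p - jj)). by rewrite size_tuple.
  exists (p - jj); split.
    move=> k kj /=. rewrite /= -/jj in kj. rewrite nth_mkseq; last lia. rewrite -addnA run //. lia.
  have jjN : N <= jj by rewrite /jj; lia.
  rewrite /= -/jj -/y !nth_mkseq; try (clearbody y jj L; lia).
  have e1 : i0 + (p - jj) + jj = i0 + p by clearbody y jj L; lia.
  have e2 : i0 + (p - jj) + (jj - size y) = i0 + (p - size y). clearbody y jj L. move: (size y) yN => sy syN. lia.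
  rewrite e1 e2 (run (p - size y)); last by have := good_pos gy; move: (size y) yN => sy syN ?; lia.
  have -> : perw x0 y (p - size y) = perw x0 y p.
    rewrite -perw_per subnK //. move: (size y) yN => sy syN; lia.
  by move=> h; apply: br; rewrite h.
have jb : forall y s j1 j2 (f : nat -> T), size y <= j1 -> j1 < j2 ->
    (forall k, k < j2 -> f k = perw x0 y (s + k)) -> f j1 <> f (j1 - size y) -> False.
  move=> y s j1 j2 f yj j12 e ne; apply: ne.
  rewrite !e; try (move: (size y) yj => ? ?; lia). by rewrite -(perw_per x0 y (s + (j1 - size y))) -addnA subnK.
have C2 : forall ij ij' u, Q ij u -> Q ij' u -> ij = ij'.
  move=> [i j] [i' j'] u [s [e ne]] [s' [e' ne']] /=.
  rewrite /= in e ne e' ne'.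
  have yin : nth [::] ys i \in ys by apply: mem_nth.
  have yin' : nth [::] ys i' \in ys by apply: mem_nth.
  have [[_ [pr _]] [_ yN]] := hys _ yin.
  have [[_ [pr' _]] [_ yN']] := hys _ yin'.
  have sl : size (nth [::] ys i) = size (nth [::] ys i').
    apply: (@samelen _ x0 _ _ s s' (2 * N)) => //; first lia.
    move=> k kN. rewrite -e; last lia. rewrite -e' //; lia.
  have ii : i = i'.
    apply: ord_inj; apply/eqP. rewrite -(nth_uniq 0 _ _ uys) ?size_map //.
    by rewrite !(nth_map [::]) // sl.
  subst i'.
  have jj : j = j'.
    apply: ord_inj. case: (ltngtP j j') => // lt.
    - case: (jb _ _ _ _ (fun k => nth x0 u k) _ _ e' ne); lia.
    - case: (jb _ _ _ _ (fun k => nth x0 u k) _ _ e ne'); lia.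
  by subst j'.
have sub : Some @: [set: 'I_K * 'I_(2 * N)] \subset g @: F.
  apply/subsetP => x /imsetP [ij _ ->].
  have [u [uF qu]] := C1 ij.
  apply/imsetP; exists u => //.
  rewrite /g; case: pickP => [ij' /asboolP q'|none].
    by rewrite (C2 _ _ _ qu q').
  by have := none ij; move/asboolP.
have := subset_leq_card sub.
rewrite card_imset; last exact: Some_inj.
rewrite cardsT card_prod !card_ord => h.
apply: (leq_trans h); exact: leq_imset_card.
Qed.

End Main.

Lemma maxsize_ge (T : eqType) (ys : seq (seq T)) y : y \in ys -> size y <= foldr maxn 0 (map size ys).
Proof.
elim: ys => [|z ys IH] //=; rewrite inE => /orP[/eqP->|/IH h].
  exact: leq_maxl.
exact: (leq_trans h (leq_maxr _ _)).
Qed.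

Theorem theorem2 (T : finType) (w : infword T) :
  linear_complexity w ->
  exists s : seq (seq T),
    forall y : seq T,
      factor w y -> primitive y -> (forall n, 1 <= n -> factor w (wpow y n)) ->
      y \in s.
Proof.
move=> [A [B hAB]].
have bound : exists M, forall y, good w y -> size y <= M.
  apply: contrapT => nok.
  have unb : forall M, exists y, good w y /\ M < size y.
    move=> M; apply: contrapT => hn; apply: nok; exists M => y gy.
    rewrite leqNgt; apply/negP => lt; apply: hn; by exists y.
  have [F hF] : exists F, forall y, good w y -> forever w y -> size y <= F.
    case: (pselect (exists y, good w y /\ forever w y)) => [[y0 [g0 f0]]|nex].
      by exists (size y0) => y gy fy; rewrite (forever_len gy g0 fy f0).
    by exists 0 => y gy fy; case: nex; exists y.
  have unb2 : forall M, exists y, good w y /\ ~ forever w y /\ M < size y.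
    move=> M; have [y [gy ly]] := unb (maxn M F).
    exists y; split => //; split; last by move: ly; rewrite gtn_max => /andP[].
    move=> fy; have := hF y gy fy; move: ly; rewrite gtn_max => /andP[_]. lia.
  have lst : forall K, exists ys : seq (seq T), size ys = K /\
      (forall y, y \in ys -> good w y /\ ~ forever w y) /\ uniq (map size ys).
    elim=> [|K [ys [sz [hy uy]]]]; first by exists [::].
    have [y [gy [nf ly]]] := unb2 (foldr maxn 0 (map size ys)).
    exists (y :: ys); split; first by rewrite /= sz.
    split.
      by move=> z; rewrite inE => /orP[/eqP->|/hy].
    rewrite /= uy andbT; apply/negP => /mapP [z zin ez].
    by move: ly; rewrite ez ltnNge maxsize_ge.
  have [ys [sz [hy uy]]] := lst (2 * A + 1).
  set N := (foldr maxn 0 (map size ys) + B).+1.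
  have := @count_lb T w ys N.
  have h1 : forall y, y \in ys -> good w y /\ ~ forever w y /\ size y <= N.
    move=> y yin; have [gy nf] := hy y yin; split => //; split => //.
    rewrite /N; have := maxsize_ge yin; move: (size y) (foldr _ _ _) => a b; lia.
  move=> /(_ h1 uy); rewrite sz => h2.
  have := leq_trans h2 (hAB (4 * N)).
  have NB : B < 2 * N by rewrite /N; lia.
  clearbody N. nia.
have [M hM] := bound.
exists (flatten [seq [seq tval t | t : n.-tuple T] | n <- iota 0 M.+1]).
move=> y fy py hy.
have sy := hM y (conj fy (conj py hy)).
apply/flatten_mapP; exists (size y); first by rewrite mem_iota /= add0n ltnS.
apply/mapP; exists (in_tuple y) => //; by rewrite mem_enum.
Qed.
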